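(* Let $\mathsf{B}$ be Berwald's metric on $\mathbb{B}^n_1(\mathbf{0})$, $$\mathsf{B}(x,y)=\frac{\big(\sqrt{(1-|x|^2)|y|^2+\langle x,y\rangle^2}+\langle x,y\rangle\big)^2}{(1-|x|^2)^2\sqrt{(1-|x|^2)|y|^2+\langle x,y\rangle^2}},$$ and let $\mathsf{B}^*=\mathsf{B}^*(x,\xi)$ be its co-metric. Set $a^{ij}=(1-|x|^2)^3(\delta^{ij}-x^ix^j)$, $b^i=(1-|x|^2)^2x^i$, $\alpha^{*2}=a^{ij}\xi_i\xi_j$ and $\beta^*=b^i\xi_i$. Then $\mathsf{B}^*$ satisfies $$\begin{aligned}&16|x|^2(1-|x|^2)^2\big\{(1-|x|^2)\alpha^{*2}+\beta^{*2}\big\}\mathsf{B}^{*4}+8\big\{(10|x|^2-1)(1-|x|^2)\alpha^{*2}\beta^*+(9|x|^2-1)\beta^{*3}\big\}\mathsf{B}^{*3}\\&+\big\{(1-20|x|^2-8|x|^4)\alpha^{*4}+6(6|x|^2-5)\alpha^{*2}\beta^{*2}-27\beta^{*4}\big\}\mathsf{B}^{*2}+12\alpha^{*4}\beta^*\mathsf{B}^*-\alpha^{*6}=0.\end{aligned}$$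
   Context: The co-metric of a Finsler metric $F$ is $F^*(x,\xi)=\sup_{y\in T_xM\setminus\{0\}}\xi(y)/F(x,y)$ for $\xi=\xi_idx^i\in T^*_xM$. *)

(* Defs.v *)
From mathcomp Require Import all_boot all_order all_algebra.
From mathcomp Require Import all_classical all_reals.
Set Implicit Arguments. Unset Strict Implicit. Unset Printing Implicit Defensive.
Import Order.TTheory GRing.Theory Num.Theory.
Local Open Scope ring_scope.
Local Open Scope classical_set_scope.

(* Points / tangent vectors / covectors of R^n are functions 'I_n -> R
   (components in the standard coordinates). *)

Definition dotp (R : realType) (n : nat) (u v : 'I_n -> R) : R :=
  \sum_(i < n) u i * v i.
Definition norm2 (R : realType) (n : nat) (u : 'I_n -> R) : R := dotp u u.

Definition berwald (R : realType) (n : nat) (x y : 'I_n -> R) : R :=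
  let s := Num.sqrt ((1 - norm2 x) * norm2 y + (dotp x y) ^+ 2) in
  (s + dotp x y) ^+ 2 / ((1 - norm2 x) ^+ 2 * s).

Definition cometric (R : realType) (n : nat)
    (F : ('I_n -> R) -> ('I_n -> R) -> R) (x xi : 'I_n -> R) : R :=
  sup [set dotp xi y / F x y | y in [set y : 'I_n -> R | y <> (fun _ => 0)]].

(* Main.v *)
Require Import Defs.
From mathcomp Require Import all_boot all_order all_algebra.
From mathcomp Require Import all_classical all_reals.
From mathcomp Require Import topology normedtype realfun.
From mathcomp Require Import ring lra.
Import Order.TTheory GRing.Theory Num.Theory.
Import numFieldNormedType.Exports.
Local Open Scope ring_scope.

Section S.
Variable R : realType.
Variable n : nat.
Implicit Types u v w : 'I_n -> R.

Lemma dotpC u v : dotp u v = dotp v u.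
Proof. by apply: eq_bigr => i _; rewrite mulrC. Qed.

Lemma dotp_lin (a c : R) u v w :
  dotp (fun i => a * u i + c * v i) w = a * dotp u w + c * dotp v w.
Proof.
rewrite /dotp !mulr_sumr -big_split; apply: eq_bigr => i _ /=.
by rewrite mulrDl !mulrA.
Qed.

Lemma norm2_ge0 u : 0 <= norm2 u.
Proof. by apply: sumr_ge0 => i _; rewrite -expr2 sqr_ge0. Qed.

Lemma norm2_eq0 u : norm2 u = 0 -> forall i, u i = 0.
Proof.
move=> /eqP; rewrite psumr_eq0; last by move=> i _; rewrite -expr2 sqr_ge0.
move=> /allP H i; have := H i (mem_index_enum i).
by rewrite /= mulf_eq0 orbb => /eqP.
Qed.

Lemma CS u v : dotp u v ^+ 2 <= norm2 u * norm2 v.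
Proof.
have [v0|vpos] := eqVneq (norm2 v) 0.
  have : dotp u v = 0.
    by rewrite /dotp big1 // => i _; rewrite (@norm2_eq0 v v0 i) mulr0.
  by move=> ->; rewrite v0 mulr0 expr0n.
have vgt : 0 < norm2 v by rewrite lt_def vpos norm2_ge0.
pose z := fun i => norm2 v * u i + (- dotp u v) * v i.
have h : 0 <= norm2 z by exact: norm2_ge0.
have e1 : dotp z u = norm2 v * norm2 u - dotp u v * dotp v u.
  by rewrite /z dotp_lin mulNr.
have e2 : dotp z v = norm2 v * dotp u v - dotp u v * norm2 v.
  by rewrite /z dotp_lin mulNr.
move: h; rewrite /norm2 {1}/z dotp_lin -/(norm2 v) -/(norm2 u).
rewrite [dotp u z]dotpC [dotp v z]dotpC e1 e2 [dotp v u]dotpC => h.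
nra.
Qed.

End S.

Section T.
Variable R : realType.

Lemma contf (b p q : R) :
  continuous (fun u : R => q * (u + 2 * b - b * u ^+ 2) - p * (Num.sqrt (1 - u ^+ 2) * (1 - b * u))).
Proof.
move=> t.
apply: cvgB.
  apply: cvgM; first exact: cvg_cst.
  apply: cvgB; first by apply: cvgD; [exact: cvg_id | exact: cvg_cst].
  apply: cvgM; first exact: cvg_cst.
  by rewrite expr2; apply: cvgM; exact: cvg_id.
apply: cvgM; first exact: cvg_cst.
apply: cvgM.
  apply: (continuous_comp (f := fun u : R => 1 - u ^+ 2) (g := @Num.sqrt R)); last exact: sqrt_continuous.
  apply: cvgB; first exact: cvg_cst.
  by rewrite expr2; apply: cvgM; exact: cvg_id.
apply: cvgB; first exact: cvg_cst.
apply: cvgM; first exact: cvg_cst.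
exact: cvg_id.
Qed.

Lemma bound2 (b u0 v0 c0 u v : R) : 0 <= b -> b < 1 -> u0 ^+ 2 + v0 ^+ 2 = 1 -> 0 < c0 ->
  u ^+ 2 + v ^+ 2 <= 1 ->
  c0 * (1 + b * u0) * (u0 + 2 * b - b * u0 ^+ 2) * u
  + c0 * (1 + b * u0) * v0 * (1 - b * u0) * v <= c0 * (1 + b * u) ^+ 2.
Proof.
move=> b0 b1 e0 c0p e.
pose mu := (1 - b ^+ 2 * u0 ^+ 2) / 2.
have u01 : u0 ^+ 2 <= 1 by have := sqr_ge0 v0; lra.
have bb : b ^+ 2 * u0 ^+ 2 <= b ^+ 2.
  by rewrite -[leRHS]mulr1; apply: ler_wpM2l => //; apply: sqr_ge0.
have b2 : b ^+ 2 < 1 by nra.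
have mup : 0 <= mu by rewrite /mu; lra.
have id : c0 * (1 + b * u) ^+ 2 - (c0 * (1 + b * u0) * (u0 + 2 * b - b * u0 ^+ 2) * u
  + c0 * (1 + b * u0) * v0 * (1 - b * u0) * v) =
  c0 * ((b ^+ 2 + mu) * (u - u0) ^+ 2 + mu * (v - v0) ^+ 2
    - mu * (u0 ^+ 2 + v0 ^+ 2 - 1) - mu * (u ^+ 2 + v ^+ 2 - 1)).
  by rewrite /mu; field.
rewrite -subr_ge0 id; apply: mulr_ge0; first exact: ltW.
rewrite e0 subrr mulr0 subr0.
have h1 : 0 <= (b ^+ 2 + mu) * (u - u0) ^+ 2 by apply: mulr_ge0; [apply: addr_ge0; [apply: sqr_ge0|] |apply: sqr_ge0].
have h2 : 0 <= mu * (v - v0) ^+ 2 by apply: mulr_ge0 => //; apply: sqr_ge0.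
have h3 : 0 <= - (mu * (u ^+ 2 + v ^+ 2 - 1)).
  by rewrite -mulrN; apply: mulr_ge0 => //; lra.
lra.
Qed.


Lemma tangency (b p q : R) : 0 <= b -> b < 1 -> 0 <= q -> 0 < p ^+ 2 + q ^+ 2 ->
  exists u0 v0 c0, [/\ u0 ^+ 2 + v0 ^+ 2 = 1, 0 <= v0, 0 < c0,
     p = c0 * (1 + b * u0) * (u0 + 2 * b - b * u0 ^+ 2) &
     q = c0 * (1 + b * u0) * v0 * (1 - b * u0)].
Proof.
move=> b0 b1 q0 pq.
have [qe|qn] := eqVneq q 0.
  have [pp|pn|pz] := ltgtP p 0.
  - exists (-1), 0, (- p / (1 - b) ^+ 2); split.
    + by rewrite expr0n /= addr0 sqrrN expr1n.
    + by [].
    + by apply: divr_gt0; [lra | apply: exprn_gt0; lra].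
    + have : 1 - b != 0 by rewrite subr_eq0; apply/eqP; lra.
      by move=> h; field.
    + by rewrite qe !mulr0 mul0r.
  - exists 1, 0, (p / (1 + b) ^+ 2); split.
    + by rewrite expr0n /= addr0 expr1n.
    + by [].
    + by apply: divr_gt0; [lra | apply: exprn_gt0; lra].
    + have : 1 + b != 0 by apply/eqP; lra.
      by move=> h; field.
    + by rewrite qe !mulr0 mul0r.
  - by move: pq; rewrite pz qe expr0n /= addr0 ltxx.
have qp : 0 < q by rewrite lt_def qn q0.
pose f := fun u : R => q * (u + 2 * b - b * u ^+ 2) - p * (Num.sqrt (1 - u ^+ 2) * (1 - b * u)).
have fm1 : f (-1) = q * (b - 1).
  rewrite /f sqrrN expr1n subrr sqrtr0 mul0r mulr0 subr0; congr (_ * _); lra.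
have f1 : f 1 = q * (1 + b).
  rewrite /f expr1n subrr sqrtr0 mul0r mulr0 subr0; congr (_ * _); lra.
have [u0 u0in fu0] : exists2 c, c \in `[-1, 1] & f c = 0.
  apply: IVT; first lra.
    by apply: continuous_subspaceT; apply: contf.
  rewrite fm1 f1; apply/andP; split.
    by rewrite ge_min; apply/orP; left; nra.
  by rewrite le_max; apply/orP; right; nra.
move: u0in; rewrite in_itv /= => /andP [u0l u0r].
have u0ne1 : u0 != 1 by apply/eqP => h; move: fu0; rewrite h f1; nra.
have u0nem1 : u0 != -1 by apply/eqP => h; move: fu0; rewrite h fm1; nra.
have w0 : 0 < 1 - u0 ^+ 2.
  have : u0 < 1 by rewrite lt_def eq_sym u0ne1 u0r.
  have : -1 < u0 by rewrite lt_def u0nem1 u0l.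
  nra.
pose v0 := Num.sqrt (1 - u0 ^+ 2).
have v0p : 0 < v0 by rewrite /v0 sqrtr_gt0.
have v0sq : v0 ^+ 2 = 1 - u0 ^+ 2 by rewrite /v0 sqr_sqrtr // ltW.
have Dp : 0 < 1 + b * u0 by nra.
have Ep : 0 < 1 - b * u0 by nra.
have hf : q * (u0 + 2 * b - b * u0 ^+ 2) = p * (v0 * (1 - b * u0)).
  by apply/eqP; rewrite -subr_eq0; apply/eqP.
exists u0, v0, (q / ((1 + b * u0) * v0 * (1 - b * u0))); split.
- by rewrite v0sq; lra.
- exact: ltW.
- by apply: divr_gt0 => //; apply: mulr_gt0 => //; apply: mulr_gt0.
- have hD : 1 + b * u0 != 0 by rewrite gt_eqF.
  have hv : v0 != 0 by rewrite gt_eqF.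
  have hE : 1 - b * u0 != 0 by rewrite gt_eqF.
  transitivity (q * (u0 + 2 * b - b * u0 ^+ 2) / (v0 * (1 - b * u0))).
    by rewrite hf; field; rewrite hE hv.
  by field; rewrite hD hE hv.
- have hD : 1 + b * u0 != 0 by rewrite gt_eqF.
  have hv : v0 != 0 by rewrite gt_eqF.
  have hE : 1 - b * u0 != 0 by rewrite gt_eqF.
  field; by rewrite hD hE hv.
Qed.


Lemma core (b m Z Y w k c0 u0 v0 : R) :
  0 < b -> b < 1 -> 0 < Y -> w ^+ 2 <= b ^+ 2 * Y -> 0 <= b ^+ 2 * Z - m ^+ 2 ->
  (b ^+ 2 * k - m * w) ^+ 2 <= (b ^+ 2 * Z - m ^+ 2) * (b ^+ 2 * Y - w ^+ 2) ->
  u0 ^+ 2 + v0 ^+ 2 = 1 -> 0 < c0 ->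
  (1 - b ^+ 2) ^+ 2 * m / b = c0 * (1 + b * u0) * (u0 + 2 * b - b * u0 ^+ 2) ->
  Num.sqrt ((1 - b ^+ 2) ^+ 3 * (b ^+ 2 * Z - m ^+ 2) / b ^+ 2)
     = c0 * (1 + b * u0) * v0 * (1 - b * u0) ->
  k * (1 - b ^+ 2) ^+ 2 * Num.sqrt ((1 - b ^+ 2) * Y + w ^+ 2)
    <= c0 * (Num.sqrt ((1 - b ^+ 2) * Y + w ^+ 2) + w) ^+ 2.
Proof.
move=> b0 b1 Y0 hH hG hK e0 c0p hp hq.
have ob : 0 < 1 - b ^+ 2 by nra.
have bn : b != 0 by rewrite gt_eqF.
have obn : 1 - b ^+ 2 != 0 by rewrite gt_eqF.
have sa : 0 < (1 - b ^+ 2) * Y + w ^+ 2.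
  by apply: ltr_wpDr; [apply: sqr_ge0 | apply: mulr_gt0].
set s := Num.sqrt _.
have sp : 0 < s by rewrite /s sqrtr_gt0.
have sn : s != 0 by rewrite gt_eqF.
have s2 : s ^+ 2 = (1 - b ^+ 2) * Y + w ^+ 2 by rewrite /s sqr_sqrtr // ltW.
set G := b ^+ 2 * Z - m ^+ 2 in hG hK hq.
set K := b ^+ 2 * k - m * w in hK.
set p := (1 - b ^+ 2) ^+ 2 * m / b in hp.
set q := Num.sqrt _ in hq.
have q0 : 0 <= q by rewrite /q sqrtr_ge0.
have q2 : q ^+ 2 = (1 - b ^+ 2) ^+ 3 * G / b ^+ 2.
  rewrite /q sqr_sqrtr //; apply: divr_ge0; last exact: sqr_ge0.
  by apply: mulr_ge0 => //; apply: exprn_ge0; apply: ltW.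
pose u := w / (b * s).
have key : forall v, u ^+ 2 + v ^+ 2 <= 1 -> s * (p * u + q * v) <= c0 * (s + w) ^+ 2 / s.
  move=> v hv.
  have := @bound2 b u0 v0 c0 u v (ltW b0) b1 e0 c0p hv; rewrite -hp -hq => h.
  have -> : c0 * (s + w) ^+ 2 / s = s * (c0 * (1 + b * u) ^+ 2).
    by rewrite /u; field; rewrite sn bn.
  by rewrite ler_pM2l.
have u2 : u ^+ 2 <= 1.
  rewrite /u expr_div_n exprMn s2 ler_pdivrMr; last first.
    by apply: mulr_gt0; [apply: exprn_gt0 | ].
  rewrite mul1r; nra.
suff : (1 - b ^+ 2) ^+ 2 * k <= c0 * (s + w) ^+ 2 / s.
  rewrite ler_pdivlMr //; congr (_ <= _); ring.
have spu : s * (p * u) = (1 - b ^+ 2) ^+ 2 * m * w / b ^+ 2.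
  by rewrite /p /u; field; rewrite sn bn.
have [qz|qnz] := eqVneq q 0.
  have Gz : G = 0.
    have : (1 - b ^+ 2) ^+ 3 * G / b ^+ 2 = 0 by rewrite -q2 qz expr0n.
    move/eqP; rewrite !mulf_eq0 invr_eq0 !expf_eq0 /= (negbTE obn) (negbTE bn) /=.
    by rewrite orbF => /eqP.
  have Kz : K = 0.
    by apply/eqP; rewrite -sqrf_eq0 eq_le sqr_ge0 andbT; move: hK; rewrite Gz mul0r.
  have := key 0; rewrite expr0n /= addr0 mulr0 addr0 => /(_ u2).
  suff -> : (1 - b ^+ 2) ^+ 2 * k = s * (p * u) by [].
  rewrite spu.
  have -> : k = m * w / b ^+ 2.
    move: Kz; rewrite /K => /eqP; rewrite subr_eq0 => /eqP <-.
    by field.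
  by field.
have qp : 0 < q by rewrite lt_def qnz q0.
have Gp : 0 < G.
  rewrite lt_def hG andbT; apply/eqP => Gz; move: qnz.
  by rewrite /q Gz mulr0 mul0r sqrtr0 eqxx.
have Gn : G != 0 by rewrite gt_eqF.
pose v := ((1 - b ^+ 2) ^+ 2 * k - s * (p * u)) / (s * q).
have sv : s * (p * u + q * v) = (1 - b ^+ 2) ^+ 2 * k.
  by rewrite /v; field; rewrite sn qnz.
rewrite -sv; apply: key.
have ev : v = (1 - b ^+ 2) ^+ 2 * K / (b ^+ 2 * s * q).
  by rewrite /v spu /K; field; rewrite sn qnz bn.
have -> : u ^+ 2 + v ^+ 2 = (w ^+ 2 * G + (1 - b ^+ 2) * K ^+ 2) / (b ^+ 2 * s ^+ 2 * G).
  rewrite ev /u !expr_div_n !exprMn q2; field.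
  by rewrite sn bn Gn obn.
rewrite ler_pdivrMr ?mul1r; last first.
  by apply: mulr_gt0 => //; apply: mulr_gt0; apply: exprn_gt0.
rewrite s2.
have h : 0 <= (1 - b ^+ 2) * (G * (b ^+ 2 * Y - w ^+ 2) - K ^+ 2).
  by apply: mulr_ge0; [apply: ltW | rewrite subr_ge0].
nra.
Qed.


End T.

Section Q.
Variable R : realType.

Definition quart (X A2 Bt Bs : R) :=
  16 * X * (1 - X) ^+ 2 * ((1 - X) * A2 + Bt ^+ 2) * Bs ^+ 4
  + 8 * ((10 * X - 1) * (1 - X) * A2 * Bt + (9 * X - 1) * Bt ^+ 3) * Bs ^+ 3
  + ((1 - 20 * X - 8 * X ^+ 2) * A2 ^+ 2 + 6 * (6 * X - 5) * A2 * Bt ^+ 2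
     - 27 * Bt ^+ 4) * Bs ^+ 2
  + 12 * A2 ^+ 2 * Bt * Bs - A2 ^+ 3.

Lemma quartic_id (b u0 v0 c0 : R) : u0 ^+ 2 + v0 ^+ 2 = 1 ->
  quart (b ^+ 2)
    ((c0 * (1 + b * u0) * (u0 + 2 * b - b * u0 ^+ 2)) ^+ 2
      + (c0 * (1 + b * u0) * v0 * (1 - b * u0)) ^+ 2)
    (c0 * (1 + b * u0) * (u0 + 2 * b - b * u0 ^+ 2) * b) c0 = 0.
Proof.
move=> e.
have -> : (c0 * (1 + b * u0) * v0 * (1 - b * u0)) ^+ 2
   = (c0 * (1 + b * u0) * (1 - b * u0)) ^+ 2 * v0 ^+ 2 by ring.
have -> : v0 ^+ 2 = 1 - u0 ^+ 2 by lra.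
rewrite /quart; ring.
Qed.
End Q.

Section N.
Variable R : realType.
Variable n : nat.
Implicit Types x xi y : 'I_n -> R.

Lemma sumA2 (c : R) x xi :
  \sum_(i < n) \sum_(j < n) c * ((i == j)%:R - x i * x j) * xi i * xi j
  = c * (norm2 xi - dotp x xi ^+ 2).
Proof.
transitivity (\sum_(i < n) (c * (xi i * xi i) - c * (x i * xi i) * dotp x xi)).
  apply: eq_bigr => i _.
  transitivity (\sum_(j < n) (c * ((i == j)%:R * (xi i * xi j))
                 - c * (x i * xi i) * (x j * xi j))).
    by apply: eq_bigr => j _; ring.
  rewrite sumrB -!mulr_sumr (bigD1 i) //= eqxx mul1r big1 ?addr0 //.
  by move=> j hj; rewrite eq_sym (negbTE hj) mul0r.
rewrite sumrB -mulr_sumr -mulr_suml -mulr_sumr /norm2 /dotp; ring.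
Qed.

Lemma sumBt (c : R) x xi : \sum_(i < n) c * x i * xi i = c * dotp x xi.
Proof. by rewrite /dotp mulr_sumr; apply: eq_bigr => i _; rewrite mulrA. Qed.

Lemma CS3 x xi y : 0 < norm2 x ->
  (norm2 x * dotp xi y - dotp x xi * dotp x y) ^+ 2
  <= (norm2 x * norm2 xi - dotp x xi ^+ 2) * (norm2 x * norm2 y - dotp x y ^+ 2).
Proof.
move=> Xp.
set X := norm2 x; set m := dotp x xi; set w := dotp x y.
pose xp := fun i => X * xi i + (- m) * x i.
pose yp := fun i => X * y i + (- w) * x i.
have h := @CS R n xp yp.
have s1 : dotp xi x = m by rewrite dotpC.
have s2 : dotp y x = w by rewrite dotpC.
have s3 : dotp y xi = dotp xi y by rewrite dotpC.
have s4 : dotp x x = X by [].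
have s5 : dotp xi xi = norm2 xi by [].
have s6 : dotp y y = norm2 y by [].
have e1 : dotp xp yp = X * (X * dotp xi y - m * w).
  rewrite /xp dotp_lin [dotp xi yp]dotpC [dotp x yp]dotpC /yp !dotp_lin.
  rewrite ?s1 ?s2 ?s3 ?s4 ?s5 ?s6 -/m -/w; ring.
have e2 : norm2 xp = X * (X * norm2 xi - m ^+ 2).
  rewrite /norm2 {1}/xp dotp_lin [dotp xi xp]dotpC [dotp x xp]dotpC /xp !dotp_lin.
  rewrite ?s1 ?s2 ?s3 ?s4 ?s5 ?s6 -/m -/w; ring.
have e3 : norm2 yp = X * (X * norm2 y - w ^+ 2).
  rewrite /norm2 {1}/yp dotp_lin [dotp y yp]dotpC [dotp x yp]dotpC /yp !dotp_lin.
  rewrite ?s1 ?s2 ?s3 ?s4 ?s5 ?s6 -/m -/w; ring.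
move: h; rewrite e1 e2 e3.
have -> : X * (X * norm2 xi - m ^+ 2) * (X * (X * norm2 y - w ^+ 2))
  = X ^+ 2 * ((X * norm2 xi - m ^+ 2) * (X * norm2 y - w ^+ 2)) by ring.
by rewrite exprMn ler_pM2l // exprn_gt0.
Qed.

End N.

Section M.
Variable R : realType.
Variable n : nat.
Implicit Types x xi y : 'I_n -> R.

Lemma core_ratio (b m Z Y w k c0 u0 v0 : R) :
  0 < b -> b < 1 -> 0 < Y -> w ^+ 2 <= b ^+ 2 * Y -> 0 <= b ^+ 2 * Z - m ^+ 2 ->
  (b ^+ 2 * k - m * w) ^+ 2 <= (b ^+ 2 * Z - m ^+ 2) * (b ^+ 2 * Y - w ^+ 2) ->
  u0 ^+ 2 + v0 ^+ 2 = 1 -> 0 < c0 ->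
  (1 - b ^+ 2) ^+ 2 * m / b = c0 * (1 + b * u0) * (u0 + 2 * b - b * u0 ^+ 2) ->
  Num.sqrt ((1 - b ^+ 2) ^+ 3 * (b ^+ 2 * Z - m ^+ 2) / b ^+ 2)
     = c0 * (1 + b * u0) * v0 * (1 - b * u0) ->
  k / ((Num.sqrt ((1 - b ^+ 2) * Y + w ^+ 2) + w) ^+ 2 /
        ((1 - b ^+ 2) ^+ 2 * Num.sqrt ((1 - b ^+ 2) * Y + w ^+ 2))) <= c0.
Proof.
move=> b0 b1 Y0 hH hG hK e0 c0p hp hq.
have := @core R b m Z Y w k c0 u0 v0 b0 b1 Y0 hH hG hK e0 c0p hp hq.
have ob : 0 < 1 - b ^+ 2 by nra.
have sa : 0 < (1 - b ^+ 2) * Y + w ^+ 2.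
  by apply: ltr_wpDr; [apply: sqr_ge0 | apply: mulr_gt0].
set s := Num.sqrt _.
have sp : 0 < s by rewrite /s sqrtr_gt0.
have s2 : s ^+ 2 = (1 - b ^+ 2) * Y + w ^+ 2 by rewrite /s sqr_sqrtr // ltW.
have sw : 0 < s + w.
  have : w ^+ 2 < s ^+ 2 by rewrite s2 ltrDr; apply: mulr_gt0.
  nra.
have d : 0 < (1 - b ^+ 2) ^+ 2 * s by apply: mulr_gt0 => //; apply: exprn_gt0.
move=> h.
rewrite ler_pdivrMr; last by apply: divr_gt0 => //; apply: exprn_gt0.
by rewrite mulrA ler_pdivlMr // mulrA.
Qed.

Lemma sup_attained (E : set R) (c : R) :
  (forall e, E e -> e <= c) -> E c -> sup E = c.
Proof.
move=> ub Ec; apply/le_anti/andP; split.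
  by apply: ge_sup; [exists c | exact: ub].
by apply: (ub_le_sup _ Ec); exists c.
Qed.

Lemma attain x xi (b c0 u0 v0 : R) : 0 < b -> b < 1 -> b ^+ 2 = norm2 x ->
  0 <= b ^+ 2 * norm2 xi - dotp x xi ^+ 2 -> u0 ^+ 2 + v0 ^+ 2 = 1 -> 0 < c0 ->
  (1 - b ^+ 2) ^+ 2 * dotp x xi / b = c0 * (1 + b * u0) * (u0 + 2 * b - b * u0 ^+ 2) ->
  Num.sqrt ((1 - b ^+ 2) ^+ 3 * (b ^+ 2 * norm2 xi - dotp x xi ^+ 2) / b ^+ 2)
     = c0 * (1 + b * u0) * v0 * (1 - b * u0) ->
  exists2 y, y <> (fun _ => 0) & dotp xi y / berwald x y = c0.
Proof.
move=> b0 b1 hb2 hG e0 c0p hp hq.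
have ob : 0 < 1 - b ^+ 2 by nra.
have bn : b != 0 by rewrite gt_eqF.
have obn : 1 - b ^+ 2 != 0 by rewrite gt_eqF.
have u01 : u0 ^+ 2 <= 1 by have := sqr_ge0 v0; lra.
have bb : b ^+ 2 * u0 ^+ 2 <= b ^+ 2.
  by rewrite -[leRHS]mulr1; apply: ler_wpM2l => //; apply: sqr_ge0.
have bu : (b * u0) ^+ 2 < 1 by rewrite exprMn; nra.
have Dp : 0 < 1 + b * u0 by nra.
have Ep : 0 < 1 - b * u0 by nra.
have Dn : 1 + b * u0 != 0 by rewrite gt_eqF.
set m := dotp x xi in hG hp hq *.
set Z := norm2 xi in hG hq.
set G := b ^+ 2 * Z - m ^+ 2 in hG hq.
set p := (1 - b ^+ 2) ^+ 2 * m / b in hp.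
set q := Num.sqrt _ in hq.
have q2 : q ^+ 2 = (1 - b ^+ 2) ^+ 3 * G / b ^+ 2.
  rewrite /q sqr_sqrtr //; apply: divr_ge0; last exact: sqr_ge0.
  by apply: mulr_ge0 => //; apply: exprn_ge0; apply: ltW.
pose g := q * v0 / ((1 - b ^+ 2) ^+ 2 * G).
pose d := u0 / b.
have [f1 f2] : (1 - b ^+ 2) * b ^+ 2 * g ^+ 2 * G = v0 ^+ 2 /\
               (1 - b ^+ 2) ^+ 2 * g * G = q * v0.
  have [Gz|Gn] := eqVneq G 0.
    have qz : q = 0 by rewrite /q Gz mulr0 mul0r sqrtr0.
    have v0z : v0 = 0.
      move: hq; rewrite qz => /esym /eqP; rewrite !mulf_eq0 (gt_eqF c0p) (negbTE Dn).
      by rewrite (gt_eqF Ep) /= orbF => /eqP.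
    by rewrite Gz v0z !mulr0 expr0n.
  split.
    by rewrite /g expr_div_n !exprMn q2; field; rewrite Gn bn obn.
  by rewrite /g; field; rewrite Gn obn.
pose xp : 'I_n -> R := fun i => norm2 x * xi i + (- m) * x i.
pose y : 'I_n -> R := fun i => g * xp i + d * x i.
have c1 : dotp xi x = m by rewrite dotpC.
have ex1 : dotp xp x = 0.
  by rewrite /xp dotp_lin (@dotpC R n xi x) -/m -/(norm2 x); ring.
have ex2 : dotp xp xi = norm2 x * Z - m ^+ 2.
  by rewrite /xp dotp_lin -/(norm2 xi) -/Z -/m; ring.
have ex3 : dotp x xp = 0 by rewrite dotpC.
have wy : dotp x y = d * norm2 x.
  by rewrite dotpC /y dotp_lin ex1 -/(norm2 x); ring.
have ky : dotp xi y = g * (norm2 x * Z - m ^+ 2) + d * m.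
  by rewrite dotpC /y dotp_lin ex2.
have Yy : norm2 y = g ^+ 2 * norm2 x * (norm2 x * Z - m ^+ 2) + d ^+ 2 * norm2 x.
  rewrite /norm2 {1}/y dotp_lin [dotp xp y]dotpC [dotp x y]dotpC /y !dotp_lin.
  rewrite ex3 [dotp xi xp]dotpC ex2 (@dotpC R n xi x) -/m -/(norm2 x); ring.
rewrite -hb2 -/G in wy ky Yy.
have s1 : (1 - b ^+ 2) * norm2 y + dotp x y ^+ 2 = 1.
  rewrite Yy wy.
  transitivity ((1 - b ^+ 2) * b ^+ 2 * g ^+ 2 * G + u0 ^+ 2).
    by rewrite /d; field.
  by rewrite f1; lra.
have hk : (1 - b ^+ 2) ^+ 2 * dotp xi y = c0 * (1 + b * u0) ^+ 2.
  rewrite ky.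
  transitivity ((1 - b ^+ 2) ^+ 2 * g * G + p * u0).
    by rewrite /p /d; field.
  rewrite f2 hp hq.
  have -> : c0 * (1 + b * u0) * v0 * (1 - b * u0) * v0 +
     c0 * (1 + b * u0) * (u0 + 2 * b - b * u0 ^+ 2) * u0 =
     c0 * (1 + b * u0) * ((u0 + 2 * b - b * u0 ^+ 2) * u0 + (1 - b * u0) * v0 ^+ 2) by ring.
  have -> : v0 ^+ 2 = 1 - u0 ^+ 2 by lra.
  ring.
exists y.
  move=> y0; move: s1.
  have -> : norm2 y = 0 by rewrite y0 /norm2 /dotp big1 // => i _; rewrite mulr0.
  have -> : dotp x y = 0 by rewrite y0 /dotp big1 // => i _; rewrite mulr0.
  by rewrite mulr0 expr0n /= addr0 => /eqP; rewrite eq_sym oner_eq0.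
rewrite /berwald -hb2 s1 sqrtr1 wy.
transitivity ((1 - b ^+ 2) ^+ 2 * dotp xi y / (1 + b * u0) ^+ 2).
  by rewrite /d; field; rewrite Dn bn obn.
by rewrite hk; field; rewrite Dn.
Qed.

End M.

Theorem lemma3p4 (R : realType) (n : nat) (x xi : 'I_n -> R) :
  norm2 x < 1 ->
  let X := norm2 x in
  let a := fun i j : 'I_n => (1 - X) ^+ 3 * ((i == j)%:R - x i * x j) in
  let b := fun i : 'I_n => (1 - X) ^+ 2 * x i in
  let A2 := \sum_(i < n) \sum_(j < n) a i j * xi i * xi j in
  let Bt := \sum_(i < n) b i * xi i in
  let Bs := cometric (@berwald R n) x xi in
  16 * X * (1 - X) ^+ 2 * ((1 - X) * A2 + Bt ^+ 2) * Bs ^+ 4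
  + 8 * ((10 * X - 1) * (1 - X) * A2 * Bt + (9 * X - 1) * Bt ^+ 3) * Bs ^+ 3
  + ((1 - 20 * X - 8 * X ^+ 2) * A2 ^+ 2 + 6 * (6 * X - 5) * A2 * Bt ^+ 2
     - 27 * Bt ^+ 4) * Bs ^+ 2
  + 12 * A2 ^+ 2 * Bt * Bs - A2 ^+ 3 = 0.
Proof.
move=> hX X a bb A2 Bt Bs.
have eA2 : A2 = (1 - X) ^+ 3 * (norm2 xi - dotp x xi ^+ 2) by rewrite /A2 /a sumA2.
have eBt : Bt = (1 - X) ^+ 2 * dotp x xi by rewrite /Bt /bb sumBt.
change (@quart R X A2 Bt Bs = 0).
rewrite eA2 eBt.
have hXx : X = norm2 x by [].
set Z := norm2 xi; set m := dotp x xi.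
have X0 : 0 <= X by exact: norm2_ge0.
have Z0 : 0 <= Z by exact: norm2_ge0.
have hm : m ^+ 2 <= X * Z by exact: CS.
have [Zz|Zn] := eqVneq Z 0.
  have mz : m = 0.
    by apply/eqP; rewrite -sqrf_eq0 eq_le sqr_ge0 andbT; rewrite Zz mulr0 in hm.
  by rewrite Zz mz /quart; ring.
have Zp : 0 < Z by rewrite lt_def Zn Z0.
have ynz : forall y : 'I_n -> R, y <> (fun _ => 0) -> 0 < norm2 y.
  move=> y hy; rewrite lt_def norm2_ge0 andbT; apply/eqP => h; apply: hy.
  by apply: funext => i; exact: (@norm2_eq0 R n y h).
have [Xz|Xn] := eqVneq X 0.
  have mz : m = 0.
    by apply/eqP; rewrite -sqrf_eq0 eq_le sqr_ge0 andbT; rewrite Xz mul0r in hm.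
  have xz : forall i, x i = 0 by apply: (@norm2_eq0 R n x); exact: Xz.
  have bw : forall y, berwald x y = Num.sqrt (norm2 y).
    move=> y; have wz : dotp x y = 0 by rewrite /dotp big1 // => i _; rewrite xz mul0r.
    rewrite /berwald -hXx Xz wz subr0 expr1n !mul1r.
    have z2 : (0 : R) ^+ 2 = 0 by rewrite expr2 mulr0.
    rewrite z2 !addr0.
    have [s0|s0] := eqVneq (Num.sqrt (norm2 y)) 0; first by rewrite s0 expr0n /= mul0r.
    by rewrite expr2 mulfK.
  have -> : Bs = Num.sqrt Z.
    rewrite /Bs /cometric; apply: sup_attained.
      move=> e [y hy <-]; rewrite bw.
      have Yp := ynz y hy.
      rewrite ler_pdivrMr ?sqrtr_gt0 // -sqrtrM //.
      apply: (le_trans (ler_norm _)); rewrite -sqrtr_sqr; apply: ler_wsqrtr.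
      exact: CS.
    exists xi.
      move=> h; move: Zn; rewrite /Z h /norm2 /dotp big1 ?eqxx // => i _.
      by rewrite mulr0.
    rewrite bw -/Z.
    have sp : 0 < Num.sqrt Z by rewrite sqrtr_gt0.
    have -> : dotp xi xi = Z by [].
    by rewrite -{1}(sqr_sqrtr Z0); field; rewrite gt_eqF.
  rewrite Xz mz.
  move: (sqr_sqrtr Z0); move: (Num.sqrt Z) => B hB; rewrite -hB /quart; ring.
have Xp : 0 < X by rewrite lt_def Xn X0.
pose b := Num.sqrt X.
have hb2 : b ^+ 2 = X by rewrite /b sqr_sqrtr.
have hb2' : b ^+ 2 = norm2 x by [].
have b0 : 0 < b by rewrite /b sqrtr_gt0.
have b1 : b < 1 by move: hX; rewrite -hXx -hb2; nra.
have hG : 0 <= b ^+ 2 * Z - m ^+ 2 by rewrite hb2 subr_ge0.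
pose p := (1 - b ^+ 2) ^+ 2 * m / b.
pose q := Num.sqrt ((1 - b ^+ 2) ^+ 3 * (b ^+ 2 * Z - m ^+ 2) / b ^+ 2).
have ob : 0 < 1 - b ^+ 2 by nra.
have eA : (1 - b ^+ 2) ^+ 3 * (Z - m ^+ 2) = p ^+ 2 + q ^+ 2.
  rewrite /q sqr_sqrtr; last first.
    apply: divr_ge0; last exact: sqr_ge0.
    by apply: mulr_ge0 => //; apply: exprn_ge0; apply: ltW.
  by rewrite /p; field; rewrite gt_eqF.
have eB : (1 - b ^+ 2) ^+ 2 * m = p * b by rewrite /p; field; rewrite gt_eqF.
have pq : 0 < p ^+ 2 + q ^+ 2.
  rewrite -eA; apply: mulr_gt0; first exact: exprn_gt0.
  rewrite subr_gt0; apply: (le_lt_trans hm); rewrite -hb2.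
  by rewrite -[ltRHS]mul1r ltr_pM2r //; nra.
have [u0 [v0 [c0 [e0 v0p c0p hp hq]]]] := @tangency R b p q (ltW b0) b1 (sqrtr_ge0 _) pq.
have -> : Bs = c0.
  rewrite /Bs /cometric; apply: sup_attained.
    move=> e [y hy <-].
    have Yp := ynz y hy.
    have hH : dotp x y ^+ 2 <= b ^+ 2 * norm2 y by rewrite hb2'; exact: CS.
    have hK := @CS3 R n x xi y Xp.
    rewrite -hXx -hb2 -/m -/Z in hK.
    have := @core_ratio R b m Z (norm2 y) (dotp x y) (dotp xi y) c0 u0 v0 b0 b1 Yp hH hG hK e0 c0p hp hq.
    by rewrite /berwald -hb2'.
  have [y hy hr] := @attain R n x xi b c0 u0 v0 b0 b1 hb2' hG e0 c0p hp hq.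
  by exists y.
rewrite -hb2 eA eB hp hq.
exact: (@quartic_id R b u0 v0 c0 e0).
Qed.
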